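(* Let $A,B\in\mathcal{F}_k$ be commonly ordered configurations of $k$ robots. There exists a feasible schedule from $A$ to $B$ with makespan $d(A,B)$ in which each robot makes at most one turn.
   Context: Robots are axis-parallel unit squares: a robot at $p$ occupies $p+\boxdot$, $\boxdot=\{q:\|q\|_\infty\le1/2\}$. Distances use the $L_1$ norm $\|p\|=|x(p)|+|y(p)|$. A configuration of $k$ robots is a tuple $(p_1,\dots,p_k)$ with $\|p_i-p_j\|_\infty\ge 1$ for $i\ne j$; $\mathcal{F}_k$ is their set. A trajectory from $a$ to $b$ over $T=[t_0,t_1]$ is a $1$-Lipschitz (w.r.t. $L_1$) map $m:T\to\mathbb{R}^2$, $m(t_0)=a$, $m(t_1)=b$, whose image is a polygonal chain; a turn is a point of the image where two segments of different orientations meet. A schedule $M=(m_1,\dots,m_k)$ over $T$ is feasible if $M(t)\in\mathcal{F}_k$ for all $t$; its makespan is $t_1-t_0$. The diameter is $d(A,B)=\max_i\|a_i-b_i\|$. An ordering of $k$ robots assigns to each pair $i<j$ one of the four relations $x(p_i)\ge x(p_j)+1$, $x(p_j)\ge x(p_i)+1$, $y(p_i)\ge y(p_j)+1$, $y(p_j)\ge y(p_i)+1$; a configuration lies in the ordering if it satisfies all the assigned relations. Two configurations are commonly ordered if they lie in a common ordering. *)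

(* Defs.v *)
From Stdlib Require Import Reals List Lra.
Open Scope R_scope.

Definition pt := (R * R)%type.

Definition psub (p q : pt) : pt := (fst p - fst q, snd p - snd q).

Definition norm1 (p : pt) : R := Rabs (fst p) + Rabs (snd p).

Definition normInf (p : pt) : R := Rmax (Rabs (fst p)) (Rabs (snd p)).

(* A configuration of k robots: robots are indexed by i < k. *)
Definition config := nat -> pt.

Definition in_Fk (k : nat) (P : config) : Prop :=
  forall i j, (i < k)%nat -> (j < k)%nat -> i <> j -> normInf (psub (P i) (P j)) >= 1.

Definition diam (k : nat) (A B : config) : R :=
  fold_right Rmax 0 (map (fun i => norm1 (psub (A i) (B i))) (seq 0 k)).

Inductive rel4 := XiGe | XjGe | YiGe | YjGe.

Definition rel4_holds (r : rel4) (pi pj : pt) : Prop :=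
  match r with
  | XiGe => fst pi >= fst pj + 1
  | XjGe => fst pj >= fst pi + 1
  | YiGe => snd pi >= snd pj + 1
  | YjGe => snd pj >= snd pi + 1
  end.

Definition ordering := nat -> nat -> rel4.

Definition lies_in (k : nat) (o : ordering) (P : config) : Prop :=
  forall i j, (i < j)%nat -> (j < k)%nat -> rel4_holds (o i j) (P i) (P j).

Definition commonly_ordered (k : nat) (A B : config) : Prop :=
  exists o : ordering, lies_in k o A /\ lies_in k o B.

Definition seg (a c : pt) (p : pt) : Prop :=
  exists l, 0 <= l <= 1 /\ p = (fst a + l * (fst c - fst a), snd a + l * (snd c - snd a)).

Definition trajectory (m : R -> pt) (t0 t1 : R) (a b : pt) : Prop :=
  t0 <= t1 /\
  (forall s t, t0 <= s <= t1 -> t0 <= t <= t1 -> norm1 (psub (m s) (m t)) <= Rabs (s - t)) /\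
  m t0 = a /\ m t1 = b.

(* The image of m over [t0,t1] is a polygonal chain from a to b with at most
   one turn, i.e. the union of the segments [a,c] and [c,b] for some c. *)
Definition at_most_one_turn (m : R -> pt) (t0 t1 : R) (a b : pt) : Prop :=
  exists c : pt, forall p : pt,
    (exists t, t0 <= t <= t1 /\ m t = p) <-> (seg a c p \/ seg c b p).

Definition feasible (k : nat) (M : nat -> R -> pt) (t0 t1 : R) : Prop :=
  forall t, t0 <= t <= t1 -> in_Fk k (fun i => M i t).

(* Main.v *)
Require Import Defs.
From Stdlib Require Import Reals List Lra Psatz.
Open Scope R_scope.

Definition interp (a b : pt) (l : R) : pt :=
  (fst a + l * (fst b - fst a), snd a + l * (snd b - snd a)).

Lemma fold_ge0 (l : list R) : 0 <= fold_right Rmax 0 l.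
Proof. induction l; simpl. lra. eapply Rle_trans; [exact IHl| apply Rmax_r]. Qed.

Lemma fold_ge (l : list R) x : In x l -> x <= fold_right Rmax 0 l.
Proof.
  induction l; simpl; [tauto|]. intros [H|H].
  - subst; apply Rmax_l.
  - eapply Rle_trans; [exact (IHl H)| apply Rmax_r].
Qed.

Lemma diam_ge k A B i : (i < k)%nat -> norm1 (psub (A i) (B i)) <= diam k A B.
Proof.
  intros H. unfold diam. apply fold_ge. apply in_map_iff. exists i; split; auto.
  apply in_seq. lia.
Qed.

Lemma norm1_ge0 p : 0 <= norm1 p.
Proof. unfold norm1. pose proof (Rabs_pos (fst p)); pose proof (Rabs_pos (snd p)); lra. Qed.

Lemma rel_interp r a1 a2 b1 b2 l :
  rel4_holds r a1 a2 -> rel4_holds r b1 b2 -> 0 <= l <= 1 ->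
  rel4_holds r (interp a1 b1 l) (interp a2 b2 l).
Proof.
  destruct r; simpl; intros H1 H2 Hl.
  - assert (0 <= (1 - l) * (fst a1 - fst a2 - 1) + l * (fst b1 - fst b2 - 1)) by nra. nra.
  - assert (0 <= (1 - l) * (fst a2 - fst a1 - 1) + l * (fst b2 - fst b1 - 1)) by nra. nra.
  - assert (0 <= (1 - l) * (snd a1 - snd a2 - 1) + l * (snd b1 - snd b2 - 1)) by nra. nra.
  - assert (0 <= (1 - l) * (snd a2 - snd a1 - 1) + l * (snd b2 - snd b1 - 1)) by nra. nra.
Qed.

Lemma rel_norm r p q : rel4_holds r p q ->
  normInf (psub p q) >= 1 /\ normInf (psub q p) >= 1.
Proof.
  unfold normInf, psub; destruct r; simpl; intros H.
  - split; eapply Rge_trans; try (apply Rle_ge; apply Rmax_l);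
    unfold Rabs; destruct Rcase_abs; lra.
  - split; eapply Rge_trans; try (apply Rle_ge; apply Rmax_l);
    unfold Rabs; destruct Rcase_abs; lra.
  - split; eapply Rge_trans; try (apply Rle_ge; apply Rmax_r);
    unfold Rabs; destruct Rcase_abs; lra.
  - split; eapply Rge_trans; try (apply Rle_ge; apply Rmax_r);
    unfold Rabs; destruct Rcase_abs; lra.
Qed.

Lemma norm1_interp a b s t :
  norm1 (psub (interp a b s) (interp a b t)) = Rabs (s - t) * norm1 (psub a b).
Proof.
  unfold norm1, psub, interp; simpl.
  replace (fst a + s * (fst b - fst a) - (fst a + t * (fst b - fst a)))
    with ((s - t) * (fst b - fst a)) by ring.
  replace (snd a + s * (snd b - snd a) - (snd a + t * (snd b - snd a)))
    with ((s - t) * (snd b - snd a)) by ring.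
  rewrite !Rabs_mult, (Rabs_minus_sym (fst b)), (Rabs_minus_sym (snd b)). ring.
Qed.

Lemma lam_range D t : 0 <= t <= D -> 0 <= t / D <= 1.
Proof.
  intros H. destruct (Req_dec D 0) as [E|E].
  - subst. unfold Rdiv. assert (t = 0) by lra. subst. rewrite Rmult_0_l. lra.
  - assert (0 < D) by lra. split.
    + apply Rmult_le_pos; [lra| left; apply Rinv_0_lt_compat; lra].
    + apply Rmult_le_reg_r with D; [lra|]. unfold Rdiv.
      rewrite Rmult_assoc, Rinv_l; lra.
Qed.

Theorem lemma5p2 (k : nat) (A B : config) :
  in_Fk k A -> in_Fk k B -> commonly_ordered k A B ->
  exists (t0 t1 : R) (M : nat -> R -> pt),
    t1 - t0 = diam k A B /\
    (forall i, (i < k)%nat ->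
       trajectory (M i) t0 t1 (A i) (B i) /\ at_most_one_turn (M i) t0 t1 (A i) (B i)) /\
    feasible k M t0 t1.
Proof.
  intros _ _ [o [HA HB]].
  set (D := diam k A B).
  assert (HD0 : 0 <= D) by apply fold_ge0.
  exists 0, D, (fun i t => interp (A i) (B i) (t / D)).
  split; [ring|]. split.
  - intros i Hi.
    pose proof (diam_ge k A B i Hi) as HN. fold D in HN.
    pose proof (norm1_ge0 (psub (A i) (B i))) as HN0.
    assert (Hend : interp (A i) (B i) (D / D) = B i).
    { destruct (Req_dec D 0) as [E|E].
      - assert (norm1 (psub (A i) (B i)) = 0) by lra.
        unfold norm1, psub in H; simpl in H.
        pose proof (Rabs_pos (fst (A i) - fst (B i))).
        pose proof (Rabs_pos (snd (A i) - snd (B i))).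
        assert (E1 : Rabs (fst (A i) - fst (B i)) = 0) by lra.
        assert (E2 : Rabs (snd (A i) - snd (B i)) = 0) by lra.
        assert (E1' : fst (A i) - fst (B i) = 0) by (revert E1; unfold Rabs; destruct Rcase_abs; lra).
        assert (E2' : snd (A i) - snd (B i) = 0) by (revert E2; unfold Rabs; destruct Rcase_abs; lra).
        clear E1 E2.
        unfold interp. destruct (A i) as [a1 a2], (B i) as [b1 b2]; simpl in *.
        f_equal; [replace a1 with b1 by lra | replace a2 with b2 by lra]; ring.
      - unfold Rdiv. rewrite Rinv_r by exact E. unfold interp.
        destruct (B i); simpl; f_equal; ring. }
    assert (Hstart : interp (A i) (B i) (0 / D) = A i).
    { unfold Rdiv; rewrite Rmult_0_l. unfold interp. destruct (A i); simpl; f_equal; ring. }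
    split.
    + split; [exact HD0|]. split; [|split; assumption].
      intros s t Hs Ht. rewrite norm1_interp.
      destruct (Req_dec D 0) as [E|E].
      * assert (norm1 (psub (A i) (B i)) = 0) by lra. rewrite H, Rmult_0_r.
        apply Rabs_pos.
      * assert (0 < D) by lra.
        replace (s / D - t / D) with ((s - t) * / D) by (unfold Rdiv; ring).
        rewrite Rabs_mult, (Rabs_right (/ D)) by (left; apply Rinv_0_lt_compat; lra).
        pose proof (Rabs_pos (s - t)).
        assert (/ D * norm1 (psub (A i) (B i)) <= 1).
        { apply Rmult_le_reg_l with D; [lra|].
          rewrite <- Rmult_assoc, Rinv_r by lra. lra. }
        nra.
    + exists (A i). intros p. split.
      * intros [t [Ht Hp]]. right. exists (t / D). split; [apply lam_range; exact Ht|].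
        rewrite <- Hp. reflexivity.
      * intros [[l [Hl Hp]] | [l [Hl Hp]]].
        -- exists 0. split; [lra|]. rewrite Hstart, Hp. destruct (A i); simpl; f_equal; ring.
        -- destruct (Req_dec D 0) as [E|E].
           ++ exists 0. split; [lra|]. rewrite Hstart. rewrite Hp.
              assert (HBA : B i = A i).
              { rewrite <- Hend. rewrite E. unfold Rdiv. rewrite Rmult_0_l.
                unfold interp. destruct (A i); simpl; f_equal; ring. }
              rewrite HBA. destruct (A i); simpl; f_equal; ring.
           ++ exists (l * D). split; [nra|].
              replace (l * D / D) with l by (field; exact E). rewrite Hp. reflexivity.
  - intros t Ht i j Hi Hj Hij. simpl.
    pose proof (lam_range D t Ht) as Hl.
    destruct (Nat.lt_gt_cases i j) as [[Hlt|Hlt] _]; [exact Hij| |]; simpl.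
    + refine (proj1 (rel_norm (o i j) _ _ _)). apply rel_interp; auto.
    + refine (proj2 (rel_norm (o j i) _ _ _)). apply rel_interp; auto.
Qed.
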